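(* Let $X_1,X_2$ be sets, $H_1$ a group acting transitively on $X_1$, $H_2$ an abelian group (written additively) acting on $X_2$, and $H_2'$ a subgroup of $H_2$. Put $X_2'=\{y\in X_2 : \text{for } g\in H_2,\ g\cdot y=y \iff g\in H_2'\}$ and $X=X_1\times X_2'$. Let $\varGamma_1:H_1\times X\to X$, $\varGamma_1(g,(x_1,x_2))=(g\cdot x_1,x_2)$. Let $\varphi:H_2\times X_1\times X_2'\to X_1$ be a map with $\varphi(0,x_1,x_2)=x_1$ and $\varphi(g+h,x_1,x_2)=\varphi(h,\varphi(g,x_1,x_2),g\cdot x_2)$ for all $g,h\in H_2$, and define the action $\varGamma_2:H_2\times X\to X$, $\varGamma_2(g,(x_1,x_2))=(\varphi(g,x_1,x_2),g\cdot x_2)$. Let $G_1=\rho_{\varGamma_1}(H_1)$, $G_2=\rho_{\varGamma_2}(H_2)\subset\mathfrak S(X)$ and assume every element of $G_1$ commutes with every element of $G_2$. Let $x=(x_1^0,x_2^0)\in X$. Then there is a bijection between $G_1\cdot[x]_{G_2}\subset G_2\backslash X$ and the orbit set $H_2'\backslash X_1$ of the action of $H_2'$ on $X_1$ given by $g\cdot y=\varphi(g,y,x_2^0)$, and this bijection commutes with the action of $G_1$ (equivalently of $H_1$), where $H_1$ acts on $G_2\backslash X$ by $h\cdot[z]_{G_2}=[\varGamma_1(h,z)]_{G_2}$ and on $H_2'\backslash X_1$ by $h\cdot[y]=[h\cdot y]$.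
   Context: $\mathfrak S(X)$ is the group of bijections of $X$; for an action $\varGamma$ of a group $K$ on $X$, $\rho_\varGamma:K\to\mathfrak S(X)$ is its permutation representation, $\rho_\varGamma(k)(x)=\varGamma(k,x)$. For a group $K$ acting on $Y$, $K\backslash Y$ is the set of orbits and $[y]_K$ the orbit of $y$. Since $H_2'$ fixes $x_2^0$, the formula $g\cdot y=\varphi(g,y,x_2^0)$ ($g\in H_2'$) defines an action of $H_2'$ on $X_1$, and the $H_1$ action on $H_2'\backslash X_1$ is well defined because $G_1$ and $G_2$ commute. *)

(* Defs.v *)
(* groups may be infinite, so carriers and operations are explicit. *)
From Stdlib Require Import Classical FunctionalExtensionality PropExtensionality.

Definition is_group {G : Type} (mul : G -> G -> G) (e : G) (inv : G -> G) : Prop :=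
  (forall a b c, mul a (mul b c) = mul (mul a b) c) /\
  (forall a, mul e a = a /\ mul a e = a) /\
  (forall a, mul (inv a) a = e /\ mul a (inv a) = e).

Definition is_abelian_group {G : Type} (add : G -> G -> G) (zero : G) (opp : G -> G) : Prop :=
  is_group add zero opp /\ (forall a b, add a b = add b a).

Definition is_subgroup {G : Type} (mul : G -> G -> G) (e : G) (inv : G -> G)
  (P : G -> Prop) : Prop :=
  P e /\ (forall a b, P a -> P b -> P (mul a b)) /\ (forall a, P a -> P (inv a)).

Definition is_action {G X : Type} (mul : G -> G -> G) (e : G) (act : G -> X -> X) : Prop :=
  (forall x, act e x = x) /\ (forall a b x, act (mul a b) x = act a (act b x)).

Definition transitive_action {G X : Type} (act : G -> X -> X) : Prop :=
  forall x y : X, exists g, act g x = y.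

Definition X2' {H2 X2 : Type} (act2 : H2 -> X2 -> X2) (P : H2 -> Prop) (y : X2) : Prop :=
  forall g, act2 g y = y <-> P g.

(* X = X1 x X2' as a predicate on X1 * X2 *)
Definition inX {X1 H2 X2 : Type} (act2 : H2 -> X2 -> X2) (P : H2 -> Prop)
  (z : X1 * X2) : Prop := X2' act2 P (snd z).

Definition Gamma1 {H1 X1 X2 : Type} (act1 : H1 -> X1 -> X1) (h : H1) (z : X1 * X2)
  : X1 * X2 := (act1 h (fst z), snd z).

Definition Gamma2 {H2 X1 X2 : Type} (act2 : H2 -> X2 -> X2) (phi : H2 -> X1 -> X2 -> X1)
  (g : H2) (z : X1 * X2) : X1 * X2 := (phi g (fst z) (snd z), act2 g (snd z)).

Definition orbit2 {H2 X1 X2 : Type} (act2 : H2 -> X2 -> X2) (phi : H2 -> X1 -> X2 -> X1)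
  (z : X1 * X2) : X1 * X2 -> Prop :=
  fun w => exists g, w = Gamma2 act2 phi g z.

Definition orbit' {H2 X1 X2 : Type} (phi : H2 -> X1 -> X2 -> X1) (P : H2 -> Prop)
  (x20 : X2) (y : X1) : X1 -> Prop :=
  fun y' => exists g, P g /\ y' = phi g y x20.

(* Main.v *)
Require Import Defs.
From Stdlib Require Import Classical FunctionalExtensionality PropExtensionality ProofIrrelevance.

Theorem mainTheorem3
  (X1 X2 H1 H2 : Type)
  (mul1 : H1 -> H1 -> H1) (one1 : H1) (inv1 : H1 -> H1)
  (act1 : H1 -> X1 -> X1)
  (add2 : H2 -> H2 -> H2) (zero2 : H2) (opp2 : H2 -> H2)
  (act2 : H2 -> X2 -> X2)
  (P : H2 -> Prop)
  (phi : H2 -> X1 -> X2 -> X1)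
  (HG1 : is_group mul1 one1 inv1)
  (Hact1 : is_action mul1 one1 act1)
  (Htrans : transitive_action act1)
  (HG2 : is_abelian_group add2 zero2 opp2)
  (Hact2 : is_action add2 zero2 act2)
  (HP : is_subgroup add2 zero2 opp2 P)
  (Hphi0 : forall x1 x2, X2' act2 P x2 -> phi zero2 x1 x2 = x1)
  (HphiD : forall g h x1 x2, X2' act2 P x2 ->
     phi (add2 g h) x1 x2 = phi h (phi g x1 x2) (act2 g x2))
  (Hcomm : forall h g z, inX act2 P z ->
     Gamma1 act1 h (Gamma2 act2 phi g z) = Gamma2 act2 phi g (Gamma1 act1 h z))
  (x10 : X1) (x20 : X2) (Hx20 : X2' act2 P x20) :
  let x := (x10, x20) in
  exists f : { S : X1 * X2 -> Prop | exists h, S = orbit2 act2 phi (Gamma1 act1 h x) } ->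
             { T : X1 -> Prop | exists y, T = orbit' phi P x20 y },
    (forall a b, f a = f b -> a = b) /\
    (forall c, exists a, f a = c) /\
    (forall S S' h z y,
       proj1_sig S = orbit2 act2 phi z ->
       proj1_sig (f S) = orbit' phi P x20 y ->
       proj1_sig S' = orbit2 act2 phi (Gamma1 act1 h z) ->
       proj1_sig (f S') = orbit' phi P x20 (act1 h y)).

Proof.
  intro x.
  destruct HG2 as [[Ha [Hz Ho]] Hc].
  destruct Hact2 as [A0 AD].
  assert (Hinv : forall g u, act2 (opp2 g) (act2 g u) = u).
  { intros g u. rewrite <- AD. rewrite (proj1 (Ho g)). apply A0. }
  assert (Xinv : forall g y, X2' act2 P y -> X2' act2 P (act2 g y)).
  { intros g y Hy k. rewrite <- (Hy k).
    rewrite <- AD, Hc, AD. split; intro E.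
    - rewrite <- (Hinv g (act2 k y)), E. apply Hinv.
    - now rewrite E. }
  assert (G2comp : forall g k z, inX act2 P z ->
     Gamma2 act2 phi k (Gamma2 act2 phi g z) = Gamma2 act2 phi (add2 g k) z).
  { intros g k [z1 z2] Hz'. unfold Gamma2, inX in *; simpl in *.
    rewrite HphiD by exact Hz'. rewrite Hc, AD. reflexivity. }
  assert (G2zero : forall z, inX act2 P z -> Gamma2 act2 phi zero2 z = z).
  { intros [z1 z2] Hz'. unfold Gamma2, inX in *; simpl in *.
    rewrite Hphi0 by exact Hz'. now rewrite A0. }
  assert (inXG2 : forall g z, inX act2 P z -> inX act2 P (Gamma2 act2 phi g z)).
  { intros g [z1 z2] Hz'. unfold inX, Gamma2 in *; simpl in *. now apply Xinv. }
  assert (orb_eq : forall g z, inX act2 P z ->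
     orbit2 act2 phi (Gamma2 act2 phi g z) = orbit2 act2 phi z).
  { intros g z Hz'. apply functional_extensionality; intro w.
    apply propositional_extensionality. unfold orbit2. split.
    - intros [k Hk]. exists (add2 g k). rewrite Hk. now apply G2comp.
    - intros [k Hk]. exists (add2 (opp2 g) k). rewrite Hk.
      rewrite <- (G2comp (opp2 g) k) by now apply inXG2.
      rewrite (G2comp g (opp2 g)) by exact Hz'. rewrite (proj2 (Ho g)). now rewrite G2zero. }
  assert (F_orb : forall b, (fun c => orbit2 act2 phi (b, x20) (c, x20)) = orbit' phi P x20 b).
  { intro b. apply functional_extensionality; intro c.
    apply propositional_extensionality. unfold orbit2, orbit', Gamma2; simpl. split.
    - intros [g Hg]. injection Hg; intros E1 E2. exists g. split; [|exact E2].
      apply (Hx20 g). now rewrite <- E1.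
    - intros [g [Pg E]]. exists g. rewrite E. f_equal. symmetry. now apply (Hx20 g). }
  assert (inXx : forall h, inX act2 P (Gamma1 act1 h x)).
  { intro h. exact Hx20. }
  assert (orb_inv : forall z w, inX act2 P w -> orbit2 act2 phi z = orbit2 act2 phi w ->
      inX act2 P z /\ exists g, w = Gamma2 act2 phi g z).
  { intros z w Hw E.
    assert (Hw' : orbit2 act2 phi z w).
    { rewrite E. exists zero2. symmetry. now apply G2zero. }
    destruct Hw' as [g Hg]. split; [|now exists g].
    destruct z as [z1 z2], w as [w1 w2]. unfold inX, Gamma2 in *; simpl in *.
    injection Hg; intros E1 _. rewrite <- (Hinv g z2), <- E1. now apply Xinv. }
  unshelve eexists.
  { intro S. exists (fun b => proj1_sig S (b, x20)).
    destruct (proj2_sig S) as [h Hh]. exists (act1 h x10). rewrite Hh. apply F_orb. }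
  split; [|split].
  - intros [S [h HS]] [S' [h' HS']] E. simpl in E.
    apply (f_equal (@proj1_sig _ _)) in E. simpl in E.
    subst S S'.
    assert (E' : orbit' phi P x20 (act1 h x10) = orbit' phi P x20 (act1 h' x10)).
    { rewrite <- (F_orb (act1 h x10)), <- (F_orb (act1 h' x10)). exact E. }
    clear E; rename E' into E.
    assert (Hm : orbit' phi P x20 (act1 h x10) (act1 h x10)).
    { exists zero2. split; [apply (proj1 HP)|]. symmetry. now apply Hphi0. }
    rewrite E in Hm. destruct Hm as [g [Pg Eg]].
    apply subset_eq_compat.
    change (orbit2 act2 phi (act1 h x10, x20) = orbit2 act2 phi (act1 h' x10, x20)).
    replace (act1 h x10, x20) with (Gamma2 act2 phi g (act1 h' x10, x20)).
    + apply orb_eq. exact Hx20.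
    + unfold Gamma2; simpl. rewrite <- Eg. f_equal. apply (Hx20 g). exact Pg.
  - intros [T [y HT]]. destruct (Htrans x10 y) as [h Hh].
    exists (exist _ (orbit2 act2 phi (Gamma1 act1 h x)) (ex_intro _ h eq_refl)).
    apply subset_eq_compat. simpl. subst T y. apply F_orb.
  - intros [S [h0 HS]] [S' [h1 HS']] h z y E1 E2 E3. simpl in *.
    subst S S'.
    destruct (orb_inv z (Gamma1 act1 h0 x) (inXx h0) (eq_sym E1)) as [Hz' [g Hg]].
    assert (E2' : orbit' phi P x20 (act1 h0 x10) = orbit' phi P x20 y).
    { rewrite <- (F_orb (act1 h0 x10)). exact E2. }
    clear E2; rename E2' into E2.
    assert (Hy : orbit' phi P x20 (act1 h0 x10) y).
    { rewrite E2. exists zero2. split; [apply (proj1 HP)|]. symmetry. now apply Hphi0. }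
    destruct Hy as [p [Pp Ep]].
    assert (Eyx : (y, x20) = Gamma2 act2 phi p (Gamma1 act1 h0 x)).
    { unfold Gamma2, Gamma1; simpl. rewrite <- Ep. f_equal. symmetry. now apply (Hx20 p). }
    assert (K1 : orbit2 act2 phi (Gamma1 act1 h z) = orbit2 act2 phi (Gamma1 act1 h (Gamma1 act1 h0 x))).
    { rewrite Hg. rewrite Hcomm by exact Hz'. symmetry. apply orb_eq. exact Hz'. }
    assert (K2 : orbit2 act2 phi (act1 h y, x20) = orbit2 act2 phi (Gamma1 act1 h (Gamma1 act1 h0 x))).
    { change (act1 h y, x20) with (Gamma1 act1 h (y, x20)). rewrite Eyx.
      rewrite Hcomm by apply inXx. apply orb_eq. exact Hx20. }
    rewrite E3, K1, <- K2. apply F_orb.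
Qed.
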